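(* Every formula $\varphi$ in first normal form is equivalent to a formula $\varphi'$ in second normal form such that $|\varphi'| \leq 3^{\mathrm{gfba}(\varphi)}\cdot|\varphi|$. Moreover, for every $b>0$, if $|\psi|\leq b$ for every limit subformula $\psi$ of $\varphi$, then $|\psi'|\leq b$ for every limit subformula $\psi'$ of $\varphi'$.
   Context: Fix a finite set $Ap$ of atomic propositions. A word is an infinite sequence $w = w[0]w[1]\dots$ of letters of $2^{Ap}$, and $w_i$ denotes the suffix $w[i]w[i+1]\dots$. Formulas are generated by $\varphi ::= \mathbf{true} \mid \mathbf{false} \mid a \mid \neg a \mid \varphi\wedge\varphi \mid \varphi\vee\varphi \mid \mathbf{X}\varphi \mid \varphi\,\mathbf{U}\,\varphi \mid \varphi\,\mathbf{W}\,\varphi \mid \mathbf{GF}\varphi \mid \mathbf{FG}\varphi$ ($a\in Ap$), where $\mathbf{GF}$, $\mathbf{FG}$ are single unary operators (limit operators). Semantics: $w\models a$ iff $a\in w[0]$, $w\models\neg a$ iff $a\notin w[0]$, Boolean constants and connectives as usual; $w\models\mathbf{X}\varphi$ iff $w_1\models\varphi$; $w\models\varphi\mathbf{U}\psi$ iff $\exists k$: $w_k\models\psi$ and $\forall j<k$: $w_j\models\varphi$; $w\models\varphi\mathbf{W}\psi$ iff ($\forall k$: $w_k\models\varphi$) or $w\models\varphi\mathbf{U}\psi$; $w\models\mathbf{GF}\varphi$ iff $w_k\models\varphi$ for infinitely many $k$; $w\models\mathbf{FG}\varphi$ iff $\exists n\,\forall k\geq n$: $w_k\models\varphi$. Two formulas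 are equivalent if satisfied by the same words. The syntax tree $T_\varphi$ has leaves $\mathbf{true},\mathbf{false},a,\neg a$ and one internal node per operator occurrence; $|\varphi|$ is its number of nodes. Formulas with top operator $\mathbf{U},\mathbf{W},\mathbf{X},\mathbf{GF},\mathbf{FG}$ are temporal formulas; those with top operator $\mathbf{GF}$ or $\mathbf{FG}$ are limit formulas, and the corresponding nodes are limit nodes. A node is under another if it is a proper descendant of it. $\mathrm{ubw}(\varphi)$ is the number of $\mathbf{U}$-nodes of $T_\varphi$ that are under some $\mathbf{W}$-node but not under any limit node. $\mathrm{gfba}(\varphi)$ is the number of distinct limit formulas $\psi'$ such that $\psi'$ is a proper subformula of some temporal subformula (proper or not) of $\varphi$. A formula is in first normal form if $\mathrm{ubw}(\varphi)=0$, and in second normal form if $\mathrm{ubw}(\varphi)=0$ and $\mathrm{gfba}(\varphi)=0$. *)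

(* Defs.v *)
From Stdlib Require Import List.
From mathcomp Require Import all_boot.
Set Implicit Arguments. Unset Strict Implicit. Unset Printing Implicit Defensive.

Section LTL.
Variable A : finType.

Definition word := nat -> {set A}.
Definition suffix (w : word) (i : nat) : word := fun n => w (i + n).

Inductive form : Type :=
| Tt | Ff | Atom (a : A) | NAtom (a : A)
| And (f g : form) | Or (f g : form)
| Next (f : form) | Until (f g : form) | WUntil (f g : form)
| GF (f : form) | FG (f : form).

Fixpoint sat (w : word) (f : form) : Prop :=
  match f with
  | Tt => True
  | Ff => False
  | Atom a => a \in w 0
  | NAtom a => a \notin w 0
  | And f g => sat w f /\ sat w g
  | Or f g => sat w f \/ sat w g
  | Next f => sat (suffix w 1) f
  | Until f g => exists k, sat (suffix w k) g /\ forall j, j < k -> sat (suffix w j) f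
  | WUntil f g => (forall k, sat (suffix w k) f) \/
                  exists k, sat (suffix w k) g /\ forall j, j < k -> sat (suffix w j) f
  | GF f => forall n, exists k, n <= k /\ sat (suffix w k) f
  | FG f => exists n, forall k, n <= k -> sat (suffix w k) f
  end.

Definition fequiv (f g : form) : Prop := forall w, sat w f <-> sat w g.

Fixpoint fsize (f : form) : nat :=
  match f with
  | Tt | Ff | Atom _ | NAtom _ => 1
  | And f g | Or f g | Until f g | WUntil f g => (fsize f + fsize g).+1
  | Next f | GF f | FG f => (fsize f).+1
  end.

Definition is_temporal (f : form) : bool :=
  match f with Next _ | Until _ _ | WUntil _ _ | GF _ | FG _ => true | _ => false end.

Definition is_limit (f : form) : bool :=
  match f with GF _ | FG _ => true | _ => false end.

Fixpoint subs (f : form) : list form :=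
  f :: match f with
       | Tt | Ff | Atom _ | NAtom _ => nil
       | And g h | Or g h | Until g h | WUntil g h => subs g ++ subs h
       | Next g | GF g | FG g => subs g
       end.

Definition psubs (f : form) : list form := tl (subs f).

(* number of U-nodes under some W-node but not under any limit node;
   underW records whether we are below a W-node (and not below a limit node) *)
Fixpoint ubw_aux (underW : bool) (f : form) : nat :=
  match f with
  | Tt | Ff | Atom _ | NAtom _ => 0
  | GF _ | FG _ => 0
  | And g h | Or g h => ubw_aux underW g + ubw_aux underW h
  | Next g => ubw_aux underW g
  | Until g h => underW + ubw_aux underW g + ubw_aux underW h
  | WUntil g h => ubw_aux true g + ubw_aux true h
  end.

Definition ubw (f : form) : nat := ubw_aux false f.

Lemma form_eq_dec : forall f g : form, {f = g} + {f <> g}.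
Proof. decide equality; exact: eq_comparable. Defined.

Definition gfba_list (f : form) : list form :=
  flat_map (fun t => if is_temporal t then filter is_limit (psubs t) else nil) (subs f).

Definition gfba (f : form) : nat := length (nodup form_eq_dec (gfba_list f)).

Definition first_nf (f : form) : Prop := ubw f = 0.
Definition second_nf (f : form) : Prop := ubw f = 0 /\ gfba f = 0.

End LTL.

(* Main.v *)
Require Import Defs.
From Stdlib Require Import List Classical.
From mathcomp Require Import all_boot zify.

Arguments form_eq_dec : simpl never.

Section S.
Variable A : finType.
Notation F := (form A).

Fixpoint sbs (p c f : F) : F :=
  if form_eq_dec f p then c else
  match f with
  | And g h => And (sbs p c g) (sbs p c h)
  | Or g h => Or (sbs p c g) (sbs p c h)
  | Next g => Next (sbs p c g)
  | Until g h => Until (sbs p c g) (sbs p c h)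
  | WUntil g h => WUntil (sbs p c g) (sbs p c h)
  | GF g => GF (sbs p c g)
  | FG g => FG (sbs p c g)
  | _ => f
  end.

Lemma sat_ext_imp (f : F) : forall w w', (forall n, w n = w' n) -> sat w f -> sat w' f.
Proof.
induction f; intros w w' E; simpl.
- auto.
- auto.
- by rewrite (E 0).
- by rewrite (E 0).
- intros [H1 H2]; split; eauto.
- intros [H1|H2]; [left|right]; eauto.
- apply IHf => n; rewrite /Defs.suffix; apply E.
- intros [k [H1 H2]]; exists k; split.
  + apply: IHf2 H1 => n; rewrite /Defs.suffix; apply E.
  + intros j hj; apply: IHf1 (H2 j hj) => n; rewrite /Defs.suffix; apply E.
- intros [H|[k [H1 H2]]]; [left|right].
  + intros k; apply: IHf1 (H k) => n; rewrite /Defs.suffix; apply E.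
  + exists k; split.
    * apply: IHf2 H1 => n; rewrite /Defs.suffix; apply E.
    * intros j hj; apply: IHf1 (H2 j hj) => n; rewrite /Defs.suffix; apply E.
- intros H n; destruct (H n) as [k [h1 h2]]; exists k; split; auto.
  apply: IHf h2 => m; rewrite /Defs.suffix; apply E.
- intros [n H]; exists n; intros k hk; apply: IHf (H k hk) => m; rewrite /Defs.suffix; apply E.
Qed.

Lemma sat_ext (f : F) w w' : (forall n, w n = w' n) -> (sat w f <-> sat w' f).
Proof. intros E; split; apply sat_ext_imp; auto. Qed.

Lemma suff2 (w : word A) i j f : sat (Defs.suffix (Defs.suffix w i) j) f <-> sat (Defs.suffix w (i + j)) f.
Proof. apply sat_ext => n; by rewrite /Defs.suffix addnA. Qed.

Lemma limit_suffix (f : F) w k : is_limit f -> (sat (Defs.suffix w k) f <-> sat w f).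
Proof.
destruct f; simpl; try discriminate; intros _.
- split.
  + intros H n; destruct (H n) as [m [h1 h2]]; exists (k + m); split; [lia|].
    by apply/suff2.
  + intros H n; destruct (H (k + n)) as [m [h1 h2]]; exists (m - k); split; [lia|].
    apply/suff2. have -> : k + (m - k) = m by lia. exact h2.
- split.
  + intros [n H]; exists (k + n); intros m hm.
    have -> : m = k + (m - k) by lia. apply/suff2. apply H; lia.
  + intros [n H]; exists n; intros m hm. apply/suff2; apply H; lia.
Qed.

Lemma subst_sat (Q : word A -> Prop) p c :
  (forall w k, Q w -> Q (Defs.suffix w k)) -> (forall w, Q w -> (sat w p <-> sat w c)) ->
  forall f w, Q w -> (sat w (sbs p c f) <-> sat w f).
Proof.
intros HS HQ f; induction f; intros w Qw; simpl; case: form_eq_dec => [e|ne];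
  try (subst p; symmetry; apply HQ; assumption); simpl; try tauto.
- rewrite IHf1 // IHf2 //.
- rewrite IHf1 // IHf2 //.
- apply IHf; auto.
- split; intros [k [H1 H2]]; exists k; split.
  + by apply/IHf2; auto.
  + intros j hj; apply/IHf1; auto.
  + by apply/IHf2; auto.
  + intros j hj; apply/IHf1; auto.
- split; (intros [H|[k [H1 H2]]]; [left|right]).
  + intros k; apply/IHf1; auto.
  + exists k; split; [apply/IHf2; auto | intros j hj; apply/IHf1; auto].
  + intros k; apply/IHf1; auto.
  + exists k; split; [apply/IHf2; auto | intros j hj; apply/IHf1; auto].
- split; intros H n; destruct (H n) as [m [h1 h2]]; exists m; split; auto;
    apply/IHf; auto.
- split; intros [n H]; exists n; intros m hm; apply/IHf; auto.
Qed.

Lemma subst_mono p f : forall w, sat w (sbs p (Ff A) f) -> sat w f.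
Proof.
induction f; intros w; simpl; case: form_eq_dec => [e|ne] //=.
- intros [H1 H2]; auto.
- intros [H|H]; auto.
- auto.
- intros [k [H1 H2]]; exists k; auto.
- intros [H|[k [H1 H2]]]; [left|right]; auto. exists k; auto.
- intros H n; destruct (H n) as [m [h1 h2]]; exists m; auto.
- intros [n H]; exists n; auto.
Qed.


Lemma subs_cons (f : F) : subs f = f :: psubs f.
Proof. by destruct f. Qed.

Lemma psubs_subs (a f : F) : In a (psubs f) -> In a (subs f).
Proof. rewrite subs_cons; by right. Qed.

Lemma fsize_pos (f : F) : 0 < fsize f.
Proof. by destruct f. Qed.

Lemma subs_trans (a b c : F) : In a (subs b) -> In b (subs c) -> In a (subs c).
Proof.
intros Ha; induction c; simpl; intros [<-|H]; auto; right;
  repeat rewrite in_app_iff in H |- *; intuition.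
Qed.

Lemma subs_size (a b : F) : In a (subs b) -> fsize a <= fsize b.
Proof.
induction b; simpl; intros [<-|H]; auto; try contradiction;
  repeat rewrite in_app_iff in H; try (destruct H as [H|H]);
  try (have := IHb1 H); try (have := IHb2 H); try (have := IHb H); lia.
Qed.

Lemma psubs_size (a b : F) : In a (psubs b) -> fsize a < fsize b.
Proof.
destruct b; simpl; try contradiction; try rewrite in_app_iff;
  intros H; try (destruct H as [H|H]); have := subs_size _ _ H; lia.
Qed.

Lemma subst_id p c (f : F) : ~ In p (subs f) -> sbs p c f = f.
Proof.
induction f; simpl; case: form_eq_dec => [e|ne] /= H //; try (exfalso; apply H; by left);
  try rewrite in_app_iff in H; f_equal; try (apply IHf1); try (apply IHf2); try (apply IHf);
  tauto.
Qed.

Variable c : F.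
Hypothesis hc : c = Tt A \/ c = Ff A.

Lemma fsize_c : fsize c = 1. Proof. by case: hc => ->. Qed.

Lemma subst_size p (f : F) : fsize (sbs p c f) <= fsize f.
Proof.
have := fsize_c.
induction f; simpl; case: form_eq_dec => [e|ne] //= hs; rewrite ?hs; try (have := fsize_pos f);
  try (have := fsize_pos f1); try (have := IHf1 hs); try (have := IHf2 hs);
  try (have := IHf hs); try lia.
Qed.

Lemma subst_size_lt p (f : F) : In p (subs f) -> 2 <= fsize p -> fsize (sbs p c f) < fsize f.
Proof.
have := fsize_c => hs.
induction f; simpl; case: form_eq_dec => [e|ne] //=; rewrite ?hs; intros [E|H] hp;
 try (subst p; simpl in *; lia); try (exfalso; by apply ne); try contradiction;
 try rewrite in_app_iff in H;
 try (have := subst_size p f);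
 try (have := subst_size p f1); try (have := subst_size p f2);
 try (destruct H as [H|H]); try (have := IHf1 H hp); try (have := IHf2 H hp);
 try (have := IHf H hp); lia.
Qed.

Ltac splitH H :=
  repeat match type of H with
  | _ \/ _ => let H' := fresh "H" in destruct H as [H|H']; [|splitH H']
  end.

Lemma subst_subs p (f x : F) : In x (subs (sbs p c f)) ->
  x = c \/ exists y, In y (subs f) /\ x = sbs p c y.
Proof.
induction f; simpl; case: form_eq_dec => [e|ne] /= H;
  try (case: hc H => -> /= [<-|[]]; by left);
  (destruct H as [E|H];
   [ right; match goal with |- exists y, (?g = y \/ _) /\ _ => exists g end;
     split; [by left| rewrite -E /=; case: form_eq_dec => //= e; exfalso; auto] | ]);
  try contradiction;
  try rewrite in_app_iff in H; splitH H. all: try match goal with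
  | H : In ?x (subs (sbs ?p ?c ?g)) , IH : In ?x (subs (sbs ?p ?c ?g)) -> _ |- _ =>
      destruct (IH H) as [->|[y [Hy ->]]];
      [ by left | right; exists y; split; [right; rewrite ?in_app_iff; auto | reflexivity]]
  end. Qed.

Lemma subst_psubs p (f x : F) : f <> p -> In x (psubs (sbs p c f)) ->
  x = c \/ exists y, In y (psubs f) /\ x = sbs p c y.
Proof.
intros ne; destruct f; simpl; case: form_eq_dec => [e|_] //= H;
  try rewrite in_app_iff in H; try contradiction; splitH H;
  try match goal with
  | H : In ?x (psubs (_ (sbs ?p ?c ?g))) |- _ => change (In x (subs (sbs p c g))) in H
  end;
  match goal with
  | H : In ?x (_ (sbs ?p ?c ?g)) |- _ =>
      destruct (subst_subs p g x H) as [->|[y [Hy ->]]];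
      [ by left | right; exists y; split; [rewrite /psubs /=; rewrite ?in_app_iff;
         first [ exact Hy | left; exact Hy | right; exact Hy ] | reflexivity]]
  end.
Qed.

Lemma subst_temporal p (f : F) : is_temporal (sbs p c f) -> f <> p /\ is_temporal f.
Proof.
destruct f; simpl; case: form_eq_dec => [e|ne] /=; try (case: hc => -> //); by [].
Qed.

Lemma subst_limit p (f : F) : is_limit (sbs p c f) -> f <> p /\ is_limit f.
Proof.
destruct f; simpl; case: form_eq_dec => [e|ne] /=; try (case: hc => -> //); by [].
Qed.

Lemma subst_ubw p (f : F) : forall u, ubw_aux u (sbs p c f) <= ubw_aux u f.
Proof.
induction f; intros u; simpl; case: form_eq_dec => [e|ne] /=; try (case: hc => -> /=; lia);
  try lia;
  try (have := IHf1 u; have := IHf2 u; lia);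
  try (have := IHf1 true; have := IHf2 true; lia);
  try (have := IHf u; lia).
Qed.

End S.
Arguments sat_ext_imp {A}.
Arguments sat_ext {A}.
Arguments suff2 {A}.
Arguments limit_suffix {A}.
Arguments subst_sat {A}.
Arguments subst_mono {A}.
Arguments subs_cons {A}.
Arguments psubs_subs {A}.
Arguments fsize_pos {A}.
Arguments subs_trans {A}.
Arguments subs_size {A}.
Arguments psubs_size {A}.
Arguments subst_id {A}.
Arguments fsize_c {A}.
Arguments subst_size {A c} hc p f.
Arguments subst_size_lt {A c} hc {p f}.
Arguments subst_subs {A c} hc {p f x}.
Arguments subst_psubs {A c} hc {p f x}.
Arguments subst_temporal {A c} hc {p f}.
Arguments subst_limit {A c} hc {p f}.
Arguments subst_ubw {A c} hc p f.
Arguments sbs {A}.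


Section T.
Variable A : finType.
Notation F := (form A).

Definition Pb (b : nat) (f : F) := forall psi, In psi (subs f) -> is_limit psi -> fsize psi <= b.

Lemma In_filter (P : pred F) l x : In x (filter P l) <-> In x l /\ P x.
Proof.
induction l as [|a l IH]; simpl; [tauto|].
case E: (P a); simpl; rewrite IH; split; intuition; subst; congruence.
Qed.

Lemma gfba_In (x f : F) : In x (gfba_list f) <->
  exists t, In t (subs f) /\ is_temporal t /\ In x (psubs t) /\ is_limit x.
Proof.
rewrite /gfba_list in_flat_map; split.
- intros [t [Ht Hx]]; exists t; move: Hx; case E: (is_temporal t) => /= Hx; [|contradiction].
  move/In_filter: Hx => [? ?]; auto.
- intros [t [Ht [Tt' [Hx Lx]]]]; exists t; split; auto; rewrite Tt'; apply/In_filter; auto.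
Qed.

Lemma count_lt (l1 l2 : list F) p : In p l2 -> (forall x, In x l1 -> In x l2 /\ x <> p) ->
  length (nodup (@form_eq_dec A) l1) < length (nodup (@form_eq_dec A) l2).
Proof.
intros Hp H12.
have H := NoDup_incl_length (l := p :: nodup (@form_eq_dec A) l1) (l' := nodup (@form_eq_dec A) l2).
have ND : NoDup (p :: nodup (@form_eq_dec A) l1).
  apply NoDup_cons; [|apply NoDup_nodup].
  intros Hin; apply nodup_In in Hin; by apply (H12 p Hin).
have INC : incl (p :: nodup (@form_eq_dec A) l1) (nodup (@form_eq_dec A) l2).
  intros x [<-|Hx]; apply nodup_In; [auto|]. apply nodup_In in Hx; by apply H12.
have := H ND INC. simpl. by move/leP.
Qed.

Lemma max_exists (l : list F) : l <> nil -> exists m, In m l /\ forall y, In y l -> fsize y <= fsize m.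
Proof.
induction l as [|a l IH]; [done|]. intros _.
destruct l as [|b l'].
- exists a; split; [by left|]. intros y [<-|[]]; auto.
- destruct IH as [m [Hm Hmax]]; [done|].
  case: (leqP (fsize a) (fsize m)) => h.
  + exists m; split; [by right|]. intros y [<-|Hy]; auto.
  + exists a; split; [by left|]. intros y [<-|Hy]; auto. have := Hmax y Hy. lia.
Qed.

Lemma gfba_sub c (hc : c = Tt A \/ c = Ff A) (p phi : F)
  (Hmax : forall y, In y (gfba_list phi) -> fsize y <= fsize p) t x :
  In t (subs (sbs p c phi)) -> is_temporal t -> In x (psubs t) -> is_limit x ->
  In x (gfba_list phi) /\ x <> p.
Proof.
intros Ht Tt' Hx Lx.
destruct (subst_subs hc Ht) as [->|[y [Hy ->]]]; [by case: hc Tt' => ->|].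
destruct (subst_temporal hc Tt') as [ne Ty].
destruct (subst_psubs hc ne Hx) as [->|[z [Hz ->]]]; [by case: hc Lx => ->|].
destruct (subst_limit hc Lx) as [nz Lz].
have Zg : In z (gfba_list phi) by apply/gfba_In; exists y; auto.
have Hzp := Hmax z Zg.
rewrite subst_id; [split; auto|].
rewrite subs_cons. intros [E|E]; [by apply nz|].
have := psubs_size _ _ E. lia.
Qed.

Lemma step (phi : F) : 0 < gfba phi -> exists phi1, fequiv phi1 phi /\ ubw phi1 <= ubw phi + ubw phi /\
  gfba phi1 < gfba phi /\ fsize phi1 <= 3 * fsize phi /\ forall b, Pb b phi -> Pb b phi1.
Proof.
intros Hg.
have [p [Hp Hmax]] : exists p, In p (gfba_list phi) /\ forall y, In y (gfba_list phi) -> fsize y <= fsize p.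
  apply max_exists. intro E. by rewrite /gfba E in Hg.
move/gfba_In: (Hp) => [t0 [Ht0 [Tt0 [Hpt Lp]]]].
have Hps : In p (subs phi) := subs_trans _ _ _ (psubs_subs _ _ Hpt) Ht0.
have p2 : 2 <= fsize p by clear -Lp; move: Lp; case: p => //= g _; have := fsize_pos g; lia.
have hcT : Tt A = Tt A \/ Tt A = Ff A by left.
have hcF : Ff A = Tt A \/ Ff A = Ff A by right.
have Esubs : forall X Y Z : F, subs (Or (And X Y) Z) = Or (And X Y) Z :: (And X Y :: subs X ++ subs Y) ++ subs Z by [].
exists (Or (And p (sbs p (Tt A) phi)) (sbs p (Ff A) phi)).
split; [|split; [|split; [|split]]].
- intro w. change ((sat w p /\ sat w (sbs p (Tt A) phi)) \/ sat w (sbs p (Ff A) phi) <-> sat w phi).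
  have M := subst_mono p phi w.
  destruct (classic (sat w p)) as [hp|hp].
  + have E := subst_sat (fun w => sat w p) p (Tt A)
      (fun w' k h => proj2 (limit_suffix p w' k Lp) h) (fun w' h => conj (fun _ => I) (fun _ => h)) phi w hp.
    tauto.
  + have E := subst_sat (fun w => ~ sat w p) p (Ff A)
      (fun w' k h h' => h (proj1 (limit_suffix p w' k Lp) h'))
      (fun w' h => conj (fun h' => h h') (fun f => False_ind _ f)) phi w hp.
    tauto.
- rewrite /ubw /=. have : ubw_aux false p = 0 by destruct p.
  have := subst_ubw hcT p phi false; have := subst_ubw hcF p phi false. lia.
- apply count_lt with p; auto.
  intros x Hx. move/gfba_In: Hx => [t [Ht [Tt' [Hxt Lx]]]].
  rewrite Esubs in Ht. simpl in Ht. rewrite !in_app_iff in Ht.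
  destruct Ht as [<-|[<-|[[Ht|Ht]|Ht]]]; try discriminate.
  + split; [apply/gfba_In; exists t; split; auto; exact (subs_trans _ _ _ Ht Hps)|].
    intros ->. have := psubs_size _ _ Hxt. have := subs_size _ _ Ht. lia.
  + exact (gfba_sub (Tt A) hcT p phi Hmax t x Ht Tt' Hxt Lx).
  + exact (gfba_sub (Ff A) hcF p phi Hmax t x Ht Tt' Hxt Lx).
- have := subst_size_lt hcT Hps p2. have := subst_size_lt hcF Hps p2.
  have := psubs_size _ _ Hpt. have := subs_size _ _ Ht0. simpl. lia.
- intros b Hb psi Hin Hl. rewrite Esubs in Hin. simpl in Hin. rewrite !in_app_iff in Hin.
  destruct Hin as [<-|[<-|[[Ht|Ht]|Ht]]]; try discriminate.
  + apply Hb; auto. exact (subs_trans _ _ _ Ht Hps).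
  + destruct (subst_subs hcT Ht) as [->|[y [Hy ->]]]; [done|].
    have [_ Ly] := subst_limit hcT Hl. have := subst_size hcT p y. have := Hb y Hy Ly. lia.
  + destruct (subst_subs hcF Ht) as [->|[y [Hy ->]]]; [done|].
    have [_ Ly] := subst_limit hcF Hl. have := subst_size hcF p y. have := Hb y Hy Ly. lia.
Qed.

Lemma main n : forall phi : F, gfba phi <= n -> ubw phi = 0 -> exists phi', fequiv phi' phi /\
  second_nf phi' /\ fsize phi' <= 3 ^ gfba phi * fsize phi /\ forall b, Pb b phi -> Pb b phi'.
Proof.
induction n as [|n IH]; intros phi Hg Hu; have [g0|gpos] := posnP (gfba phi).
- exists phi; rewrite g0 expn0 mul1n; split; [by move=> w| split; [by split|split; auto]].
- lia.
- exists phi; rewrite g0 expn0 mul1n; split; [by move=> w| split; [by split|split; auto]].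
- destruct (step phi gpos) as [phi1 [E1 [U1 [G1 [S1 P1]]]]].
  destruct (IH phi1 ltac:(lia) ltac:(lia)) as [phi2 [E2 [N2 [S2 P2]]]].
  exists phi2; split; [|split; [done|split]].
  + intro w; have := E1 w; have := E2 w; tauto.
  + have h1 : 3 ^ gfba phi1 <= 3 ^ (gfba phi).-1 by rewrite leq_exp2l //; lia.
    have h2 := leq_mul h1 S1. apply: leq_trans S2 _. apply: leq_trans (leq_mul h1 S1) _.
    rewrite -{2}(prednK gpos) expnS. move: (3 ^ _) => e. lia.
  + intros b Hb; apply P2, P1, Hb.
Qed.

End T.

Theorem proposition2 (A : finType) (phi : form A) :
  first_nf phi ->
  exists phi' : form A,
    fequiv phi' phi /\ second_nf phi' /\
    fsize phi' <= 3 ^ gfba phi * fsize phi /\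
    (forall b : nat, 0 < b ->
       (forall psi, In psi (subs phi) -> is_limit psi -> fsize psi <= b) ->
       forall psi', In psi' (subs phi') -> is_limit psi' -> fsize psi' <= b).
Proof.
intros H.
destruct (main A (gfba phi) phi (leqnn (gfba phi)) H) as [phi' [E [S [Z Pp]]]].
exists phi'; split; [done|split; [done|split; [done|]]].
intros b _ Hb; exact (Pp b Hb).
Qed.
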